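(* Let $p:X\to Y$ be a factor map between topological spaces and $\Delta=\{p^{-1}(y): y\in Y\}$. If $p$ has property (COMP), then $p$ has property (CONT).
   Context: A factor map $p:X\to Y$ is a surjective map such that $A\subset Y$ is open iff $p^{-1}(A)$ is open in $X$. A $\Delta$-map is a continuous map $h:X\to X$ such that for each $\omega\in\Delta$, $h(\omega)$ is contained in some element of $\Delta$; $\mathrm{End}(X,\Delta)$ is the monoid of all $\Delta$-maps and $\mathrm{End}(Y)=C(Y,Y)$ the monoid of continuous self-maps of $Y$. For $h\in\mathrm{End}(X,\Delta)$, $\psi(h):Y\to Y$ is the unique map with $p\circ h=\psi(h)\circ p$ (it is continuous). Property (COMP): for every compact $L\subset Y$ there is a compact $K\subset X$ with $p(K)=L$. Property (CONT): the map $\psi:\mathrm{End}(X,\Delta)\to\mathrm{End}(Y)$ is continuous with respect to the compact open topologies (generated by subbasic sets $\{f: f(K)\subset U\}$, $K$ compact, $U$ open). *)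

(* Defs.v *)
From mathcomp Require Import all_boot.
From mathcomp Require Import boolp classical_sets topology.
Set Implicit Arguments. Unset Strict Implicit. Unset Printing Implicit Defensive.
Local Open Scope classical_set_scope.

(* A set A of self-maps of T is open in the subspace D (of the space of all
   self-maps T -> T) for the compact-open topology, i.e. the topology
   generated by the subbasic sets [set f | f @` K `<=` U], K compact, U open:
   every f in A has a finite intersection of subbasic neighbourhoods whose
   trace on D lies inside A. *)
Definition co_open {T : topologicalType} (D A : set (T -> T)) : Prop :=
  A `<=` D /\
  forall f, A f ->
    exists (n : nat) (K U : nat -> set T),
      (forall i, (i < n)%N -> [/\ compact (K i), open (U i) & f @` K i `<=` U i]) /\
      (forall g, D g -> (forall i, (i < n)%N -> g @` K i `<=` U i) -> A g).

Definition factor_map {X Y : topologicalType} (p : X -> Y) : Prop :=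
  (forall y, exists x, p x = y) /\
  (forall A : set Y, open A <-> open (p @^-1` A)).

(* Delta-maps for Delta = {p^-1(y) : y in Y}; this is End(X, Delta) *)
Definition Delta_map {X Y : topologicalType} (p : X -> Y) (h : X -> X) : Prop :=
  continuous h /\
  forall y : Y, exists y' : Y, h @` (p @^-1` [set y]) `<=` p @^-1` [set y'].

Definition EndY {Y : topologicalType} : set (Y -> Y) := [set g | continuous g].

(* psi(h) = g  iff  p \o h = g \o p  (g is unique since p is surjective) *)
Definition is_psi {X Y : topologicalType} (p : X -> Y) (h : X -> X) (g : Y -> Y) :=
  p \o h = g \o p.

Definition COMP {X Y : topologicalType} (p : X -> Y) : Prop :=
  forall L : set Y, compact L -> exists K : set X, compact K /\ p @` K = L.

(* psi : End(X,Delta) -> End(Y) is continuous for the compact-open topologies: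
   the preimage of every open set B of End(Y) is open in End(X,Delta). *)
Definition CONT {X Y : topologicalType} (p : X -> Y) : Prop :=
  forall B : set (Y -> Y), co_open EndY B ->
    co_open (Delta_map p) [set h | Delta_map p h /\ exists g, is_psi p h g /\ B g].

(* Main.v *)
Require Import Defs.
From mathcomp Require Import all_boot.
From mathcomp Require Import boolp classical_sets topology.
Set Implicit Arguments. Unset Strict Implicit. Unset Printing Implicit Defensive.
Local Open Scope classical_set_scope.

Theorem mainTheorem4 (X Y : topologicalType) (p : X -> Y) :
  factor_map p -> COMP p -> CONT p.
Proof.
move=> [surj fopen] comp B [BD Bopen].
split; first by move=> h [].
move=> h [hD [g [hg Bg]]].
have [n [K [U [HKU Hall]]]] := Bopen g Bg.
have pc : continuous p.
  by apply/continuousP => A oA; apply/fopen.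
pose L i := match pselect (compact (K i)) with
  | left cK => projT1 (cid (comp _ cK)) | right _ => set0 end.
exists n, L, (fun i => p @^-1` U i).
split.
  move=> i ni; have [cK oU gKU] := HKU i ni.
  rewrite /L; case: pselect => // cK'.
  case: (cid _) => /= Li [cLi pLi]; split => //.
    by move/continuousP: pc; apply.
  move=> _ [x Lx <-] /=.
  have -> : p (h x) = (p \o h) x by [].
  rewrite hg /=; apply: gKU; exists (p x) => //; rewrite -pLi; by exists x.
move=> h' h'D h'L; split => //.
have [h'c h'f] := h'D.
pose s y := projT1 (cid (surj y)).
have sK y : p (s y) = y by rewrite /s; case: (cid _).
pose g' y := p (h' (s y)).
have hg' : is_psi p h' g'.
  apply: funext => x /=; rewrite /g'.
  have [y' Hy'] := h'f (p x).
  have e1 : p (h' x) = y' by apply: (Hy' (h' x)); exists x.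
  have e2 : p (h' (s (p x))) = y' by apply: (Hy' _); exists (s (p x)) => //; exact: sK.
  by rewrite e1 e2.
exists g'; split => //.
apply: Hall.
  apply/continuousP => A oA; apply/fopen.
  have -> : p @^-1` (g' @^-1` A) = (p \o h') @^-1` A.
    by rewrite hg'.
  apply: (continuousP _).1 oA => x.
  exact: continuous_comp (h'c x) (pc _).
move=> i ni _ [y Ky <-].
have [cK oU gKU] := HKU i ni.
move: (h'L i ni); rewrite /L; case: pselect => // cK'.
case: (cid _) => /= Li [cLi pLi] HL.
have : K i y by [].
rewrite -pLi => -[x Lx <-].
have -> : g' (p x) = (g' \o p) x by [].
rewrite -hg' /=; apply: (HL (h' x)); by exists x.
Qed.
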